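(* Let $\mathcal{N}^+$ be a (metric or topological) rooted network on $X$ and let $Z\subseteq X$ with $|Z|\ge 2$. For every $x\in Z$ there is $y\in Z$ such that $\mathrm{MRCA}(\{x,y\})=\mathrm{MRCA}(Z)$.
   Context: Rooted network on $X$: connected directed acyclic graph without loops (at most two parallel edges allowed) with a root $r$ (indegree 0, outdegree 2), leaves bijectively labeled by $X$ (indegree 1, outdegree 0), tree nodes (indegree 1, outdegree 2) and hybrid nodes (indegree 2, outdegree 1). A node $v$ is above $u$ if there is a nonempty directed path from $v$ to $u$. For nonempty $Z\subseteq X$, let $D$ be the set of nodes lying on every directed path from $r$ to any $z\in Z$; $D$ is totally ordered by ''above'', and $\mathrm{MRCA}(Z)$ is the lowest element of $D$. *)

(* Defs.v *)
From mathcomp Require Import all_boot.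
Set Implicit Arguments. Unset Strict Implicit. Unset Printing Implicit Defensive.

Section Net.
Variables (V X : finType).

(* A directed multigraph on the finite node set V: [mult u v] is the number
   of parallel edges from u to v. *)
Definition edge (mult : V -> V -> nat) : rel V := fun u v => 0 < mult u v.
Definition indeg (mult : V -> V -> nat) (v : V) : nat := \sum_(u : V) mult u v.
Definition outdeg (mult : V -> V -> nat) (v : V) : nat := \sum_(u : V) mult v u.

Definition above (mult : V -> V -> nat) (v u : V) : Prop :=
  exists p : seq V, p != [::] /\ path (edge mult) v p /\ last v p = u.

Definition rooted_network (mult : V -> V -> nat) (r : V) (lab : X -> V) : Prop :=
  (forall u v, mult u v <= 2) /\ (forall v, mult v v = 0) /\
  (forall v, ~ above mult v v) /\
  (forall u v, connect (fun a b => edge mult a b || edge mult b a) u v) /\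
  indeg mult r = 0 /\ outdeg mult r = 2 /\
  injective lab /\ (forall x, indeg mult (lab x) = 1 /\ outdeg mult (lab x) = 0) /\
  (forall v, v = r \/ (exists x, v = lab x) \/
             (indeg mult v = 1 /\ outdeg mult v = 2) \/
             (indeg mult v = 2 /\ outdeg mult v = 1)).

(* w lies on every directed path from r to every z in Z
   (a path from r to z is the node sequence r :: p) *)
Definition in_D (mult : V -> V -> nat) (r : V) (lab : X -> V) (Z : {set X}) (w : V) : Prop :=
  forall z, z \in Z -> forall p : seq V, path (edge mult) r p -> last r p = lab z ->
    w \in r :: p.

Definition is_MRCA (mult : V -> V -> nat) (r : V) (lab : X -> V) (Z : {set X}) (m : V) : Prop :=
  in_D mult r lab Z m /\ (forall w, in_D mult r lab Z w -> w = m \/ above mult w m).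

End Net.

(* Main.v *)
Require Import Defs.
From mathcomp Require Import all_boot.
From Stdlib Require Import Classical.
From mathcomp Require Import zify.
Set Implicit Arguments. Unset Strict Implicit. Unset Printing Implicit Defensive.

Section H.
Variable V : finType.
Variable mult : V -> V -> nat.
Local Notation e := (edge mult).

Lemma above_conn u v : above mult u v -> connect e u v.
Proof. case=> p [_ [hp hl]]; apply/connectP; exists p => //. Qed.

Lemma conn_above u v : connect e u v -> u != v -> above mult u v.
Proof.
case/connectP=> p hp hl huv; exists p; split; last by [].
by case: p hp hl => [|? ?] //= _ hl; rewrite hl eqxx in huv.
Qed.

Lemma above_trans u v w : above mult u v -> connect e v w -> above mult u w.
Proof.
case=> p [hn [hp hl]] /connectP [q hq hl2]; exists (p ++ q); split.
  by case: p hn {hp hl}.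
by rewrite cat_path last_cat hp hl hq.
Qed.

Definition anc v := [set u | (u != v) && connect e u v].

Lemma anc_lt u v : (forall w, ~ above mult w w) -> above mult u v -> #|anc u| < #|anc v|.
Proof.
move=> ac huv; apply: proper_card; apply/properP; split.
  apply/subsetP=> a; rewrite !inE => /andP [hau hcu].
  apply/andP; split; last exact: connect_trans hcu (above_conn huv).
  apply/eqP=> hav; subst a; apply: (ac u); exact: above_trans huv hcu.
exists u; rewrite !inE ?eqxx //= andbC.
rewrite (above_conn huv) /=; apply/eqP=> h; subst; exact: (ac v).
Qed.

Lemma split_at x0 p w : w \in x0 :: p -> path e x0 p ->
  exists p1 p2, p = p1 ++ p2 /\ last x0 p1 = w /\ path e x0 p1 /\ path e w p2.
Proof.
case/splitPl=> p1 p2 hl; rewrite cat_path => /andP [h1 h2].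
by exists p1, p2; rewrite -hl.
Qed.

Lemma comp x0 p w1 w2 : path e x0 p -> w1 \in x0 :: p -> w2 \in x0 :: p ->
  connect e w1 w2 || connect e w2 w1.
Proof.
elim: p x0 => [|y p IH] x0 /=.
  by move=> _; rewrite !inE => /eqP -> /eqP ->; rewrite connect0.
move=> /andP [hxy hp].
have hc := path_connect (x:=x0) (p:=y::p) (e:=e); rewrite /= hxy hp in hc.
rewrite in_cons => /orP [/eqP -> | h1]; rewrite in_cons => /orP [/eqP -> | h2].
- by rewrite connect0.
- by rewrite hc // in_cons h2 orbT.
- by rewrite hc ?orbT // in_cons h1 orbT.
- exact: IH hp h1 h2.
Qed.

Lemma succ x0 p w : path e x0 p -> w \in x0 :: p -> w != last x0 p -> exists s, e w s.
Proof.
elim: p x0 => [|y p IH] x0 /=.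
  by move=> _; rewrite inE => /eqP ->; rewrite eqxx.
move=> /andP [hxy hp]; rewrite in_cons => /orP [/eqP -> | h] hl.
  by exists y.
exact: IH hp h hl.
Qed.

Lemma ex_min (P : V -> Prop) (f : V -> nat) : (exists v, P v) ->
  exists m, P m /\ forall w, P w -> f m <= f w.
Proof.
case=> v hv.
suff: forall n v, f v <= n -> P v -> exists m, P m /\ forall w, P w -> f m <= f w.
  by move/(_ (f v) v (leqnn _) hv).
elim=> [|n IH] u hu hPu.
  by exists u; split => // w _; rewrite leqn0 in hu; rewrite (eqP hu).
case: (classic (exists w, P w /\ f w < f u)) => [[w [hw hlt]] | hn].
  by apply: (IH w) => //; rewrite -ltnS; exact: leq_trans hlt hu.
exists u; split => // w hw; rewrite leqNgt; apply/negP => hlt; apply: hn; by exists w.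
Qed.

End H.

Lemma sum_pos (V : finType) (F : V -> nat) : 0 < \sum_u F u -> exists u, 0 < F u.
Proof.
case: (pickP (fun u => 0 < F u)) => [u hu _ | h hs]; first by exists u.
exfalso; move: hs; rewrite big1 // => u _.
by move: (h u); rewrite lt0n => /negbFE/eqP.
Qed.

Lemma term_le_sum (V : finType) (F : V -> nat) s : F s <= \sum_u F u.
Proof. by rewrite (bigD1 s) //= leq_addr. Qed.

Lemma edge_above (V : finType) (mult : V -> V -> nat) u v :
  edge mult u v -> above mult u v.
Proof. by move=> h; exists [:: v]; rewrite /= h. Qed.

Lemma reach (V : finType) (mult : V -> V -> nat) r :
  (forall v, ~ above mult v v) -> (forall v, v != r -> 0 < indeg mult v) ->
  forall v, connect (edge mult) r v.
Proof.
move=> ac hin v.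
have [n hn] : exists n, #|anc mult v| <= n by exists #|anc mult v|.
elim: n v hn => [|n IH] v hn; case: (eqVneq v r) => [-> | hvr]; rewrite ?connect0 //;
  have [u hu] := sum_pos (hin v hvr); have := anc_lt ac (edge_above (hu : edge mult u v)).
- by rewrite ltnNge (leq_trans hn (leq0n _)).
- move=> hlt; apply: connect_trans (IH u _) (connect1 (hu : edge mult u v)).
  by rewrite -ltnS; exact: leq_trans hlt hn.
Qed.

Theorem mainTheorem5 (V X : finType) (mult : V -> V -> nat) (r : V) (lab : X -> V)
  (Z : {set X}) :
  rooted_network mult r lab -> 2 <= #|Z| ->
  forall x, x \in Z ->
    exists y, y \in Z /\
      exists m, is_MRCA mult r lab Z m /\ is_MRCA mult r lab [set x; y] m.
Proof.
move=> [hle [hloop [ac [hconn [hinr [houtr [inj [hleaf hcls]]]]]]]] hZ x xZ.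
set e := edge mult.
have hin : forall v, v != r -> 0 < indeg mult v.
  move=> v hvr; case: (hcls v) => [hv | [[z ->] | [[-> _] | [-> _]]]] //.
    by rewrite hv eqxx in hvr.
  by rewrite (hleaf z).1.
have rch := reach ac hin.
have paths : forall z, exists p, path e r p /\ last r p = lab z.
  by move=> z; case/connectP: (rch (lab z)) => p hp hl; exists p.
have [px [hpx hlx]] := paths x.
have inDx : forall (W : {set X}) w, x \in W -> in_D mult r lab W w -> w \in r :: px.
  by move=> W w hW hw; exact: hw x hW px hpx hlx.
have [m [hmD hmmin]] := @ex_min _ (fun w => in_D mult r lab Z w)
  (fun w => #|V| - #|anc mult w|) (ex_intro _ r (fun z _ p _ _ => mem_head _ _)).
have mrcaZ : is_MRCA mult r lab Z m.
  split=> // w hw.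
  case: (eqVneq w m) => [-> | hwm]; [by left | right].
  case/orP: (comp hpx (inDx _ _ xZ hw) (inDx _ _ xZ hmD)) => hc.
    exact: conn_above hc hwm.
  have := anc_lt ac (conn_above hc (ltac:(by rewrite eq_sym))).
  have := hmmin w hw; have := max_card (anc mult w); have := max_card (anc mult m).
  move=> h1 h2 h3 h4; exfalso; lia.
have abm_nD : forall c, above mult m c -> ~ in_D mult r lab Z c.
  move=> c hmc hc; case: mrcaZ => _ /(_ c hc) [hcm | hcm].
    by rewrite hcm in hmc; exact: ac m hmc.
  exact: ac m (above_trans hmc (above_conn hcm)).
case: (eqVneq m (lab x)) => [hmx | hmx].
  exfalso.
  have : 0 < #|Z :\ x| by move: hZ; rewrite (cardsD1 x) xZ.
  rewrite card_gt0 => /set0Pn [y]; rewrite !inE => /andP [hyx yZ].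
  have [py [hpy hly]] := paths y.
  have hmy : m \in r :: py := hmD y yZ py hpy hly.
  have hneq : m != last r py.
    by rewrite hly hmx; apply/eqP => /inj h; rewrite h eqxx in hyx.
  have [s hs] := succ hpy hmy hneq.
  have := term_le_sum (fun u => mult (lab x) u) s.
  by rewrite -/(outdeg mult (lab x)) (hleaf x).2 leqn0 -hmx => /eqP h; rewrite /e /edge h in hs.
have hmpx : m \in r :: px := inDx _ _ xZ hmD.
have inDxx : in_D mult r lab [set x] (lab x).
  by move=> z; rewrite inE => /eqP -> p _ <-; exact: mem_last.
have abmx : above mult m (lab x).
  apply: conn_above hmx; have [p1 [p2 [hpe [hl1 [_ hp2]]]]] := split_at hmpx hpx.
  by apply/connectP; exists p2 => //; rewrite -hlx hpe last_cat hl1.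
have [c [[hcD hmc] hcmin]] := @ex_min _ (fun c => in_D mult r lab [set x] c /\ above mult m c)
  (fun c => #|anc mult c|) (ex_intro _ (lab x) (conj inDxx abmx)).
have [y [q [yZ [hq [hlq hcq]]]]] : exists y q, y \in Z /\ path e r q /\ last r q = lab y /\ c \notin r :: q.
  apply: NNPP => hn; apply: (abm_nD c hmc) => z zZ q hq hl.
  apply/negPn/negP => hcq; apply: hn; by exists z, q.
exists y; split => //; exists m; split => //; split.
  by move=> z; rewrite !inE => /orP [] /eqP ->; apply: hmD.
move=> w hw.
have hwx : w \in r :: px := hw x (set21 x y) px hpx hlx.
have hwq : w \in r :: q := hw y (set22 x y) q hq hlq.
case: (eqVneq w m) => [-> | hwm]; [by left | right].
case/orP: (comp hpx hwx hmpx) => hc; first exact: conn_above hc hwm.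
exfalso.
have hmw : above mult m w := conn_above hc (ltac:(by rewrite eq_sym)).
have hwD1 : in_D mult r lab [set x] w.
  by move=> z; rewrite inE => /eqP -> p hp hl; exact: hw x (set21 x y) p hp hl.
have hcw : c != w by apply/eqP => h; rewrite h hwq in hcq.
have hcpx : c \in r :: px := hcD x (set11 x) px hpx hlx.
have hwc_no : ~ above mult w c.
  move=> hwc; have := anc_lt ac hwc; have := hcmin w (conj hwD1 hmw).
  by rewrite leqNgt => /negP.
case/orP: (comp hpx hcpx hwx) => hcc; last first.
  by apply: hwc_no; apply: (conn_above hcc); rewrite eq_sym.
have hcw' : above mult c w := conn_above hcc hcw.
have [q1 [q2 [hqe [hlq1 [hpq1 _]]]]] := split_at hwq hq.
have [p1 [p2 [hpe [hlp1 [_ hpp2]]]]] := split_at hwx hpx.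
have hcin : c \in r :: (q1 ++ p2).
  apply: (hcD x (set11 x)); first by rewrite cat_path hpq1 hlq1 hpp2.
  by rewrite last_cat hlq1 -hlp1 -last_cat -hpe.
move: hcin; rewrite -cat_cons mem_cat => /orP [h | h].
  by move: hcq; rewrite hqe -cat_cons mem_cat h.
apply: hwc_no; apply: conn_above; last by rewrite eq_sym.
by apply: (path_connect hpp2); rewrite in_cons h orbT.
Qed.
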